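(* Let $G$ be a finite group and $T$ a $G$-Tambara functor. The set $\mathrm{RadId}_G(T)$ of radical Tambara ideals of $T$, ordered by inclusion, is a frame. Meets are given by levelwise intersections, and joins are given by $\bigvee_\lambda I_\lambda=\sqrt{\sum_\lambda I_\lambda}$, where $\sum_\lambda I_\lambda$ is the Tambara ideal with $(\sum_\lambda I_\lambda)(G/H)=\sum_\lambda I_\lambda(G/H)$.
   Context: All rings are commutative with unit. A $G$-Tambara functor $T$ consists of commutative rings $T(G/H)$ for subgroups $H\le G$ with restriction ring maps, additive transfer maps, multiplicative norm maps and conjugation isomorphisms satisfying the standard Tambara axioms (Hill–Mazur). A Tambara ideal is a family of ring ideals $I(G/H)\subseteq T(G/H)$ closed under restriction, transfer, norm and conjugation; levelwise intersections and levelwise sums of Tambara ideals are Tambara ideals. $\langle x\rangle$ denotes the Tambara ideal generated by an element $x$, and $\langle x\rangle^n$ its $n$-fold product, where the product $IJ$ is the Tambara ideal generated by the levelwise products $I(G/H)J(G/H)$. The radical $\sqrt I$ has $\sqrt I(G/H)=\{x\in T(G/H)\mid \langle x\rangle^n\subseteq I\text{ for some }n\ge1\}$; $I$ is radical if $I=\sqrt I$. A frame is a complete lattice in which finite meets distribute over arbitrary joins. *)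

(* Defs.v *)
(* G-Tambara functors for a finite group G, presented (Tambara)
   as functors on finite G-sets with restriction / transfer / norm along
   equivariant maps; the levels T(G/H) are the values on the orbits G/H. *)
From HB Require Import structures.
From mathcomp Require Import all_boot all_order all_algebra all_fingroup.
Set Implicit Arguments. Unset Strict Implicit. Unset Printing Implicit Defensive.
Import GRing.Theory.

Section GSets.
Variable gT : finGroupType.

Record gset := GSet {
  gcar :> finType;
  gsact : gcar -> gT -> gcar;
  gsact1 : forall x, gsact x 1%g = x;
  gsactM : forall x g h, gsact x (g * h)%g = gsact (gsact x g) h }.

Record gmap (X Y : gset) := GMap {
  gfun :> X -> Y;
  gfunE : forall x g, gfun (gsact x g) = gsact (gfun x) g }.

Definition gid (X : gset) : gmap X X := @GMap X X id (fun _ _ => erefl).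

Lemma gcomp_proof (X Y Z : gset) (f : gmap Y Z) (g : gmap X Y) x h :
  f (g (gsact x h)) = gsact (f (g x)) h.
Proof. by rewrite !gfunE. Qed.

Definition gcomp (X Y Z : gset) (f : gmap Y Z) (g : gmap X Y) : gmap X Z :=
  GMap (gcomp_proof f g).

Definition gempty : gset :=
  @GSet void (fun x _ => x) (fun _ => erefl) (fun _ _ _ => erefl).

Definition sum_act (X Y : gset) (z : (X + Y)%type) (g : gT) : (X + Y)%type :=
  match z with inl x => inl (gsact x g) | inr y => inr (gsact y g) end.

Lemma sum_act1 (X Y : gset) z : @sum_act X Y z 1%g = z.
Proof. by case: z => x /=; rewrite gsact1. Qed.

Lemma sum_actM (X Y : gset) z g h :
  @sum_act X Y z (g * h)%g = sum_act (sum_act z g) h.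
Proof. by case: z => x /=; rewrite gsactM. Qed.

Definition gsum (X Y : gset) : gset := GSet (@sum_act1 X Y) (@sum_actM X Y).

Definition ginl (X Y : gset) : gmap X (gsum X Y) :=
  @GMap X (gsum X Y) inl (fun _ _ => erefl).
Definition ginr (X Y : gset) : gmap Y (gsum X Y) :=
  @GMap Y (gsum X Y) inr (fun _ _ => erefl).

Definition is_pullback (X Y Y' W : gset) (f : gmap X Y) (g : gmap Y' Y)
    (g' : gmap W X) (f' : gmap W Y') :=
  (forall w, f (g' w) = g (f' w)) /\
  (forall x y, f x = g y -> exists! w, g' w = x /\ f' w = y).

(* exponential diagram: dependent product Pi_f A for p : A -> X, f : X -> Y.
   An element is a pair (y, s) with s a section of p over the fibre f^-1(y). *)
Section Exponential.
Variables (A X Y : gset) (p : gmap A X) (f : gmap X Y).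

Definition pi_ok (ys : Y * {ffun X -> option A}) : bool :=
  [forall x, if f x == ys.1 then (if ys.2 x is Some a then p a == x else false)
             else ys.2 x == None].

Definition pi_car := {ys : Y * {ffun X -> option A} | pi_ok ys}.

Definition pi_raw (ys : Y * {ffun X -> option A}) (g : gT) :=
  (gsact ys.1 g, [ffun x => omap (fun a => gsact a g) (ys.2 (gsact x g^-1%g))]).

Lemma pi_raw_ok ys g : pi_ok ys -> pi_ok (pi_raw ys g).
Proof.
move=> /forallP ok; apply/forallP => x /=; rewrite ffunE.
have := ok (gsact x g^-1%g); rewrite gfunE.
have -> : (gsact (f x) g^-1 == ys.1) = (f x == gsact ys.1 g).
  apply/eqP/eqP => [<-|->]; by rewrite -gsactM ?mulVg ?mulgV gsact1.
case: eqP => _; last by case: (ys.2 _).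
case: (ys.2 _) => [a /eqP pa|//] /=.
by rewrite gfunE pa -gsactM mulVg gsact1.
Qed.

Definition pi_act (w : pi_car) (g : gT) : pi_car :=
  exist _ (pi_raw (val w) g) (pi_raw_ok g (valP w)).

Lemma pi_act1 w : pi_act w 1%g = w.
Proof.
apply: val_inj; case: w => [[y s] ok] /=; rewrite /pi_raw /= gsact1.
congr (_, _); apply/ffunP => x; rewrite ffunE invg1 gsact1.
by case: (s x) => //= a; rewrite gsact1.
Qed.

Lemma pi_actM w g h : pi_act w (g * h)%g = pi_act (pi_act w g) h.
Proof.
apply: val_inj; case: w => [[y s] ok] /=; rewrite /pi_raw /= gsactM.
congr (_, _); apply/ffunP => x; rewrite !ffunE invMg gsactM.
by case: (s _) => //= a; rewrite gsactM.
Qed.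

Definition gpi : gset := GSet pi_act1 pi_actM.

Definition exp_pi : gmap gpi Y :=
  @GMap gpi Y (fun w : pi_car => (val w).1) (fun _ _ => erefl).

(* E = { (a, (y,s)) | s (p a) = Some a }  ( ~= X x_Y Pi_f A ) *)
Definition ev_ok (aw : A * pi_car) : bool := (val aw.2).2 (p aw.1) == Some aw.1.

Definition ev_car := {aw : A * pi_car | ev_ok aw}.

Lemma ev_raw_ok aw g : ev_ok aw -> ev_ok (gsact aw.1 g, pi_act aw.2 g).
Proof.
rewrite /ev_ok /= ffunE gfunE -gsactM mulgV gsact1 => /eqP -> //.
Qed.

Definition ev_act (v : ev_car) (g : gT) : ev_car :=
  exist _ (gsact (val v).1 g, pi_act (val v).2 g) (ev_raw_ok g (valP v)).

Lemma ev_act1 v : ev_act v 1%g = v.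
Proof. by apply: val_inj; case: v => [[a w] ok] /=; rewrite gsact1 pi_act1. Qed.

Lemma ev_actM v g h : ev_act v (g * h)%g = ev_act (ev_act v g) h.
Proof. by apply: val_inj; case: v => [[a w] ok] /=; rewrite gsactM pi_actM. Qed.

Definition gev : gset := GSet ev_act1 ev_actM.

Definition exp_e : gmap gev gpi :=
  @GMap gev gpi (fun v : ev_car => (val v).2) (fun _ _ => erefl).
Definition exp_ev : gmap gev A :=
  @GMap gev A (fun v : ev_car => (val v).1) (fun _ _ => erefl).

End Exponential.

(* the orbit G/H, realised as the right cosets H x with right multiplication *)
Section Orbit.
Variable H : {group gT}.
Local Open Scope group_scope.

Definition orb_car := {C : {set gT} | C \in rcosets H [set: gT]}.

Lemma orb_raw_ok (C : {set gT}) g :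
  C \in rcosets H [set: gT] -> C :* g \in rcosets H [set: gT].
Proof.
case/rcosetsP => x _ ->; apply/rcosetsP; exists (x * g)%g; first by rewrite inE.
by rewrite rcosetM.
Qed.

Definition orb_act (C : orb_car) (g : gT) : orb_car :=
  exist _ (val C :* g) (orb_raw_ok g (valP C)).

Lemma orb_act1 C : orb_act C 1%g = C.
Proof. by apply: val_inj; rewrite /= rcoset1. Qed.

Lemma orb_actM C g h : orb_act C (g * h)%g = orb_act (orb_act C g) h.
Proof. by apply: val_inj; rewrite /= rcosetM. Qed.

Definition orbit : gset := GSet orb_act1 orb_actM.
End Orbit.

End GSets.

Local Open Scope ring_scope.

Record tambara (gT : finGroupType) := Tambara {
  tT :> gset gT -> comPzRingType;
  tR : forall X Y : gset gT, gmap X Y -> tT Y -> tT X;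
  tTr : forall X Y : gset gT, gmap X Y -> tT X -> tT Y;
  tN : forall X Y : gset gT, gmap X Y -> tT X -> tT Y;
  tR_id : forall X a, tR (gid X) a = a;
  tTr_id : forall X a, tTr (gid X) a = a;
  tN_id : forall X a, tN (gid X) a = a;
  tR_comp : forall X Y Z (f : gmap Y Z) (g : gmap X Y) a,
    tR (gcomp f g) a = tR g (tR f a);
  tTr_comp : forall X Y Z (f : gmap Y Z) (g : gmap X Y) a,
    tTr (gcomp f g) a = tTr f (tTr g a);
  tN_comp : forall X Y Z (f : gmap Y Z) (g : gmap X Y) a,
    tN (gcomp f g) a = tN f (tN g a);
  tR_rmorph : forall X Y (f : gmap X Y),
    [/\ tR f 0 = 0, tR f 1 = 1, (forall a b, tR f (a + b) = tR f a + tR f b)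
      & (forall a b, tR f (a * b) = tR f a * tR f b)];
  tTr_additive : forall X Y (f : gmap X Y),
    tTr f 0 = 0 /\ (forall a b, tTr f (a + b) = tTr f a + tTr f b);
  tN_multiplicative : forall X Y (f : gmap X Y),
    tN f 1 = 1 /\ (forall a b, tN f (a * b) = tN f a * tN f b);
  tBC_Tr : forall X Y Y' W (f : gmap X Y) (g : gmap Y' Y) (g' : gmap W X)
      (f' : gmap W Y'), is_pullback f g g' f' ->
    forall a, tR g (tTr f a) = tTr f' (tR g' a);
  tBC_N : forall X Y Y' W (f : gmap X Y) (g : gmap Y' Y) (g' : gmap W X)
      (f' : gmap W Y'), is_pullback f g g' f' ->
    forall a, tR g (tN f a) = tN f' (tR g' a);
  tdistr : forall A X Y (p : gmap A X) (f : gmap X Y) a,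
    tN f (tTr p a) = tTr (exp_pi p f) (tN (exp_e p f) (tR (exp_ev p f) a));
  tempty : forall a b : tT (gempty gT), a = b;
  tcoprod : forall X Y : gset gT,
    bijective (fun c : tT (gsum X Y) => (tR (ginl X Y) c, tR (ginr X Y) c))
}.

Section Ideals.
Variables (gT : finGroupType) (T : tambara gT).

Definition tfam := forall H : {group gT}, T (orbit H) -> Prop.

Definition tsub (I J : tfam) := forall H x, I H x -> J H x.
Definition teq (I J : tfam) := forall H x, I H x <-> J H x.

(* Tambara ideal: levelwise ring ideals, closed under restriction, transfer,
   norm and conjugation (= restriction along G-maps between orbits) *)
Definition is_tideal (I : tfam) :=
  [/\ (forall H, I H 0),
      (forall H a b, I H a -> I H b -> I H (a + b)),
      (forall H a b, I H b -> I H (a * b)),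
      (forall H K (f : gmap (orbit H) (orbit K)) a, I K a -> I H (tR f a))
    & (forall H K (f : gmap (orbit H) (orbit K)) a,
         I H a -> I K (tTr f a) /\ I K (tN f a))].

Definition tgen (S : tfam) : tfam :=
  fun K y => forall J, is_tideal J -> tsub S J -> J K y.
Definition tgen1 (H : {group gT}) (x : T (orbit H)) : tfam :=
  fun K y => forall J, is_tideal J -> J H x -> J K y.

Definition tprod (I J : tfam) : tfam :=
  tgen (fun K z => exists a b, [/\ I K a, J K b & z = a * b]).

Fixpoint tpow (I : tfam) (n : nat) : tfam :=
  match n with
  | 0 => fun _ _ => True
  | 1 => I
  | (_.+1 as m).+1 => tprod (tpow I m) I
  end.

Definition tradical (I : tfam) : tfam :=
  fun H x => exists n, (1 <= n)%N /\ tsub (tpow (tgen1 x) n) I.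

Definition is_radical (I : tfam) := teq I (tradical I).

Definition is_radideal (I : tfam) := is_tideal I /\ is_radical I.

Definition tsumfam (L : Type) (I : L -> tfam) : tfam :=
  fun K y => exists (n : nat) (l : 'I_n -> L) (a : 'I_n -> T (orbit K)),
    (forall i, I (l i) K (a i)) /\ y = \sum_(i < n) a i.

Definition tcap (L : Type) (I : L -> tfam) : tfam := fun K y => forall l, I l K y.
Definition tmeet (I J : tfam) : tfam := fun K y => I K y /\ J K y.

Definition tjoin (L : Type) (I : L -> tfam) : tfam := tradical (tsumfam I).

End Ideals.

(* Main.v *)
Require Import Defs.
From mathcomp Require Import all_boot all_order all_algebra all_fingroup.
From Stdlib Require Import FunctionalExtensionality ProofIrrelevance.
Set Implicit Arguments. Unset Strict Implicit. Unset Printing Implicit Defensive.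
Import GRing.Theory.
Local Open Scope ring_scope.

Section Tools.
Variable gT : finGroupType.
Implicit Types X Y Z W : gset gT.

Lemma gmap_ext X Y (f g : gmap X Y) : (forall x, f x = g x) -> f = g.
Proof.
case: f g => f fE [g gE] /= H.
have ? : f = g by apply: functional_extensionality.
subst g; congr GMap; apply: proof_irrelevance.
Qed.

Section Sub.
Variables (W : gset gT) (P : pred W).
Hypothesis HP : forall w g, P (gsact w g) = P w.
Definition sub_car := {w : W | P w}.
Lemma sub_ok (w : sub_car) g : P (gsact (val w) g).
Proof. by rewrite HP (valP w). Qed.
Definition sub_act (w : sub_car) g : sub_car := exist _ (gsact (val w) g) (sub_ok w g).
Lemma sub_act1 w : sub_act w 1%g = w.
Proof. by apply: val_inj; rewrite /= gsact1. Qed.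
Lemma sub_actM w g h : sub_act w (g * h)%g = sub_act (sub_act w g) h.
Proof. by apply: val_inj; rewrite /= gsactM. Qed.
Definition gsub : gset gT := GSet sub_act1 sub_actM.
Definition gval : gmap gsub W := @GMap gT gsub W (fun w : sub_car => val w) (fun _ _ => erefl).
End Sub.

Definition prod_act X Y (p : (X * Y)%type) g : (X * Y)%type := (gsact p.1 g, gsact p.2 g).
Lemma prod_act1 X Y p : @prod_act X Y p 1%g = p.
Proof. by case: p => a b; rewrite /prod_act /= !gsact1. Qed.
Lemma prod_actM X Y p g h : @prod_act X Y p (g * h)%g = prod_act (prod_act p g) h.
Proof. by case: p => a b; rewrite /prod_act /= !gsactM. Qed.
Definition gprod X Y : gset gT := GSet (@prod_act1 X Y) (@prod_actM X Y).


Lemma gsact_inj X g : injective (fun x : X => gsact x g).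
Proof.
move=> x y /= E.
by rewrite -[x]gsact1 -[y]gsact1 -(mulgV g) !gsactM E.
Qed.

Local Open Scope group_scope.

Lemma obase_ok (H : {group gT}) : (H :* 1) \in rcosets H [set: gT].
Proof. by apply/rcosetsP; exists 1; rewrite ?inE. Qed.
Definition obase (H : {group gT}) : Defs.orbit H := exist (fun C : {set gT} => C \in rcosets H [set: gT]) _ (obase_ok H).

Lemma orbit_trans (H : {group gT}) (C : Defs.orbit H) : exists x, C = gsact (obase H) x.
Proof.
case: C => C0 pf; case/rcosetsP: (pf) => x _ E; exists x; apply: val_inj => /=.
by rewrite E rcoset1.
Qed.

Lemma omap_ext (H : {group gT}) Y (f g : gmap (Defs.orbit H) Y) :
  f (obase H) = g (obase H) -> f = g.
Proof.
move=> E; apply: gmap_ext => C; case: (orbit_trans C) => x ->.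
by rewrite !gfunE E.
Qed.

Lemma omap_surj (H K : {group gT}) (f : gmap (Defs.orbit H) (Defs.orbit K)) y :
  exists x, f x = y.
Proof.
case: (orbit_trans y) => a ->; case: (orbit_trans (f (obase H))) => b Eb.
exists (gsact (obase H) (b^-1 * a)); by rewrite gfunE Eb -gsactM mulKVg.
Qed.

Section Decomp.
Variables (W : gset gT) (w0 : W).

Definition stab_set := [set g : gT | gsact w0 g == w0].
Lemma stab_group_set : group_set stab_set.
Proof.
apply/group_setP; split; first by rewrite inE gsact1.
by move=> x y; rewrite !inE => /eqP hx /eqP hy; rewrite gsactM hx hy.
Qed.
Definition stabG : {group gT} := Group stab_group_set.

Lemma stab_coset x a : a \in stabG :* x -> gsact w0 a = gsact w0 x.
Proof.
rewrite mem_rcoset => /= ; rewrite inE => /eqP E.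
by rewrite -{1}(mulgKV x a) gsactM E.
Qed.

Definition iota_fun (C : Defs.orbit stabG) : W := gsact w0 (repr (val C)).

Lemma iota_base x : iota_fun (gsact (obase stabG) x) = gsact w0 x.
Proof.
rewrite /iota_fun /= rcoset1; apply: stab_coset; exact: mem_repr_rcoset.
Qed.

Lemma iotaE C g : iota_fun (gsact C g) = gsact (iota_fun C) g.
Proof.
case: (orbit_trans C) => x ->; by rewrite -gsactM !iota_base gsactM.
Qed.

Definition iota : gmap (Defs.orbit stabG) W := GMap iotaE.

Lemma iota_inj : injective iota.
Proof.
move=> C1 C2; case: (orbit_trans C1) => x ->; case: (orbit_trans C2) => y ->.
rewrite /= !iota_base => E.
have hs : x * y^-1 \in stabG by rewrite inE gsactM E -gsactM mulgV gsact1.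
apply: val_inj => /=; rewrite !rcoset1.
by apply/(@rcoset_eqP _ stabG); rewrite mem_rcoset.
Qed.

Definition inorb (w : W) := [exists g, w == gsact w0 g].

Lemma inorb_inv w g : inorb (gsact w g) = inorb w.
Proof.
apply/existsP/existsP => [[h /eqP E]|[h /eqP E]].
  exists (h * g^-1); apply/eqP; by rewrite gsactM -E -gsactM mulgV gsact1.
exists (h * g); apply/eqP; by rewrite gsactM E.
Qed.

Lemma notinorb_inv w g : ~~ inorb (gsact w g) = ~~ inorb w.
Proof. by rewrite inorb_inv. Qed.

Definition Wrest := gsub notinorb_inv.

Definition hdec_fun (u : gsum (Defs.orbit stabG) Wrest) : W :=
  match u with inl C => iota C | inr w => val w end.

Lemma hdecE u g : hdec_fun (gsact u g) = gsact (hdec_fun u) g.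
Proof. by case: u => [C|w] //=; rewrite iotaE. Qed.

Definition hdec : gmap (gsum (Defs.orbit stabG) Wrest) W := GMap hdecE.

Lemma iota_inorb C : inorb (iota C).
Proof.
case: (orbit_trans C) => x ->; apply/existsP; exists x; by rewrite /= iota_base.
Qed.

Lemma hdec_inj : injective hdec.
Proof.
move=> [C1|w1] [C2|w2] //= E.
- by rewrite (iota_inj E).
- by move: (valP w2); rewrite /= -E iota_inorb.
- by move: (valP w1); rewrite /= E iota_inorb.
- by congr inr; apply: val_inj.
Qed.

Lemma hdec_surj w : exists u, hdec u = w.
Proof.
case: (boolP (inorb w)) => [/existsP [x /eqP ->]|hw].
  by exists (inl (gsact (obase stabG) x)); rewrite /= iota_base.
by exists (inr (exist _ w hw : sub_car _)).
Qed.

Lemma Wrest_card : (#|Wrest| < #|W|)%N.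
Proof.
rewrite /= card_sig.
apply: (@leq_ltn_trans #|predC1 w0|).
  apply: subset_leq_card; apply/subsetP => w; rewrite !inE => hw.
  apply/eqP => E; move: hw; rewrite E; case/negP; apply/existsP; exists 1; by rewrite gsact1.
rewrite cardC1; case: #|W| (max_card (pred1 w0)) => //; by rewrite card1.
Qed.

Lemma hdec_inl C : exists x, hdec (inl C) = gsact w0 x.
Proof. case: (orbit_trans C) => x ->; exists x; by rewrite /= iota_base. Qed.

End Decomp.

Lemma decomp W (w0 : W) : exists S (W' : gset gT) (h : gmap (gsum (Defs.orbit S) W') W),
  [/\ injective h, forall w, exists u, h u = w, (#|W'| < #|W|)%N
    & forall C, exists x, h (inl C) = gsact w0 x].
Proof.
exists (stabG w0), (Wrest w0), (hdec w0); split.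
- exact: hdec_inj. - exact: hdec_surj. - exact: Wrest_card. - exact: hdec_inl.
Qed.

End Tools.

Section Tamb.
Variables (gT : finGroupType) (T : tambara gT).
Implicit Types X Y Z W : gset gT.

Lemma tR0 X Y (f : gmap X Y) : tR f 0 = 0 :> T X. Proof. by case: (tR_rmorph T f). Qed.
Lemma tR1 X Y (f : gmap X Y) : tR f 1 = 1 :> T X. Proof. by case: (tR_rmorph T f). Qed.
Lemma tRD X Y (f : gmap X Y) (a b : T Y) : tR f (a + b) = tR f a + tR f b.
Proof. by case: (tR_rmorph T f). Qed.
Lemma tRM X Y (f : gmap X Y) (a b : T Y) : tR f (a * b) = tR f a * tR f b.
Proof. by case: (tR_rmorph T f). Qed.
Lemma tTr0 X Y (f : gmap X Y) : tTr f 0 = 0 :> T Y. Proof. by case: (tTr_additive T f). Qed.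
Lemma tTrD X Y (f : gmap X Y) (a b : T X) : tTr f (a + b) = tTr f a + tTr f b.
Proof. by case: (tTr_additive T f). Qed.
Lemma tN1 X Y (f : gmap X Y) : tN f 1 = 1 :> T Y. Proof. by case: (tN_multiplicative T f). Qed.
Lemma tNM X Y (f : gmap X Y) (a b : T X) : tN f (a * b) = tN f a * tN f b.
Proof. by case: (tN_multiplicative T f). Qed.
Lemma tRX X Y (f : gmap X Y) (a : T Y) n : tR f (a ^+ n) = tR f a ^+ n.
Proof. elim: n => [|n IH]; by rewrite ?expr0 ?tR1 // !exprS tRM IH. Qed.
Lemma tNX X Y (f : gmap X Y) (a : T X) n : tN f (a ^+ n) = tN f a ^+ n.
Proof. elim: n => [|n IH]; by rewrite ?expr0 ?tN1 // !exprS tNM IH. Qed.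

Lemma T_trivial X : (X -> False) -> forall a b : T X, a = b.
Proof.
move=> hX a b.
pose i : gmap (gempty gT) X :=
  @GMap gT (gempty gT) X (fun v : void => match v with end) (fun v => match v with end).
pose j : gmap X (gempty gT) :=
  @GMap gT X (gempty gT) (fun x => match hX x with end) (fun x => match hX x with end).
have E : gid X = gcomp i j by apply: gmap_ext => x; case: (hX x).
by rewrite -(tR_id a) -(tR_id b) E !tR_comp (tempty (tR i a) (tR i b)).
Qed.

Lemma Tr_empty X Y (f : gmap X Y) (z : T X) : (X -> False) -> tTr f z = 0.
Proof. by move=> hX; rewrite (T_trivial hX z 0) tTr0. Qed.
Lemma N_empty X Y (f : gmap X Y) (z : T X) : (X -> False) -> tN f z = 1.
Proof. by move=> hX; rewrite (T_trivial hX z 1) tN1. Qed.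

Section Iso.
Variables (X W : gset gT) (h : gmap X W).
Hypothesis hinj : injective h.
Hypothesis hsurj : forall w, exists x, h x = w.
Lemma hs w : exists x, h x == w.
Proof. by case: (hsurj w) => x <-; exists x. Qed.
Definition kinv w := xchoose (hs w).
Lemma kinvK w : h (kinv w) = w. Proof. exact/eqP/(xchooseP (hs w)). Qed.
Lemma kinvE w g : kinv (gsact w g) = gsact (kinv w) g.
Proof. by apply: hinj; rewrite gfunE !kinvK. Qed.
Definition ginv : gmap W X := GMap kinvE.

Lemma ginv_pb : is_pullback ginv (gid X) h (gid X).
Proof.
split=> [x|w x /= E] /=; first by apply: hinj; rewrite kinvK.
exists x; split; last by move=> x' [_ <-].
by split=> //; rewrite -E kinvK.
Qed.

Lemma Tr_iso Z (f : gmap W Z) (z : T W) : tTr f z = tTr (gcomp f h) (tR h z).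
Proof.
transitivity (tTr (gcomp (gcomp f h) ginv) z).
  by congr tTr; apply: gmap_ext => w /=; rewrite kinvK.
rewrite tTr_comp; congr tTr.
by have := tBC_Tr ginv_pb z; rewrite tR_id tTr_id.
Qed.

Lemma N_iso Z (f : gmap W Z) (z : T W) : tN f z = tN (gcomp f h) (tR h z).
Proof.
transitivity (tN (gcomp (gcomp f h) ginv) z).
  by congr tN; apply: gmap_ext => w /=; rewrite kinvK.
rewrite tN_comp; congr tN.
by have := tBC_N ginv_pb z; rewrite tR_id tN_id.
Qed.
End Iso.

Definition gfromempty X : gmap (gempty gT) X :=
  @GMap gT (gempty gT) X (fun v : void => match v with end) (fun v => match v with end).

Section Coprod.
Variables X Y : gset gT.

Lemma pb_inl : is_pullback (ginl X Y) (ginl X Y) (gid X) (gid X).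
Proof.
split=> // x y [E]; exists x; split; first by split.
by move=> w [].
Qed.
Lemma pb_inr : is_pullback (ginr X Y) (ginr X Y) (gid Y) (gid Y).
Proof.
split=> // x y [E]; exists x; split; first by split.
by move=> w [].
Qed.
Lemma pb_inlr : is_pullback (ginr X Y) (ginl X Y) (gfromempty Y) (gfromempty X).
Proof. by split=> [[]|]. Qed.
Lemma pb_inrl : is_pullback (ginl X Y) (ginr X Y) (gfromempty X) (gfromempty Y).
Proof. by split=> [[]|]. Qed.

Lemma coprod_inj (c d : T (gsum X Y)) :
  tR (ginl X Y) c = tR (ginl X Y) d -> tR (ginr X Y) c = tR (ginr X Y) d -> c = d.
Proof.
move=> h1 h2; case: (tcoprod T X Y) => G GK _.
by rewrite -(GK c) -(GK d) h1 h2.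
Qed.

Lemma coprod_ex (a : T X) (b : T Y) :
  exists c : T (gsum X Y), tR (ginl X Y) c = a /\ tR (ginr X Y) c = b.
Proof.
case: (tcoprod T X Y) => G _ KG.
exists (G (a, b)); by have := KG (a, b) => [[-> ->]].
Qed.

Lemma sum_decTr (c : T (gsum X Y)) :
  c = tTr (ginl X Y) (tR (ginl X Y) c) + tTr (ginr X Y) (tR (ginr X Y) c).
Proof.
apply: coprod_inj; rewrite tRD.
- rewrite (tBC_Tr pb_inl) (tBC_Tr pb_inlr) tR_id tTr_id Tr_empty ?addr0 //; by case.
- rewrite (tBC_Tr pb_inr) (tBC_Tr pb_inrl) tR_id tTr_id Tr_empty ?add0r //; by case.
Qed.

Lemma sum_decN (c : T (gsum X Y)) :
  c = tN (ginl X Y) (tR (ginl X Y) c) * tN (ginr X Y) (tR (ginr X Y) c).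
Proof.
apply: coprod_inj; rewrite tRM.
- rewrite (tBC_N pb_inl) (tBC_N pb_inlr) tR_id tN_id N_empty ?mulr1 //; by case.
- rewrite (tBC_N pb_inr) (tBC_N pb_inrl) tR_id tN_id N_empty ?mul1r //; by case.
Qed.

Lemma Tr_sum Z (f : gmap (gsum X Y) Z) (c : T (gsum X Y)) :
  tTr f c = tTr (gcomp f (ginl X Y)) (tR (ginl X Y) c)
          + tTr (gcomp f (ginr X Y)) (tR (ginr X Y) c).
Proof. by rewrite {1}(sum_decTr c) tTrD !tTr_comp. Qed.

Lemma N_sum Z (f : gmap (gsum X Y) Z) (c : T (gsum X Y)) :
  tN f c = tN (gcomp f (ginl X Y)) (tR (ginl X Y) c)
          * tN (gcomp f (ginr X Y)) (tR (ginr X Y) c).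
Proof. by rewrite {1}(sum_decN c) tNM !tN_comp. Qed.
End Coprod.


Section PB.
Variables (A X Y : gset gT) (o : gmap A Y) (f : gmap X Y).
Definition pb_pred : pred (gprod A X) := fun q => o q.1 == f q.2.
Lemma pb_inv q g : pb_pred (gsact q g) = pb_pred q.
Proof.
rewrite /pb_pred /= !gfunE; apply/eqP/eqP => [|->] //; exact: gsact_inj.
Qed.
Definition gpb := gsub pb_inv.
Definition pfst : gmap gpb A :=
  @GMap gT gpb A (fun w : sub_car pb_pred => (val w).1) (fun _ _ => erefl).
Definition psnd : gmap gpb X :=
  @GMap gT gpb X (fun w : sub_car pb_pred => (val w).2) (fun _ _ => erefl).
Lemma pb_is : is_pullback f o psnd pfst.
Proof.
split=> [w|x a E] /=; first by rewrite (eqP (valP w)).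
have hq : pb_pred (a, x) by rewrite /pb_pred /= E.
exists (exist _ (a, x) hq : sub_car pb_pred); split => //.
move=> w [E1 E2]; apply: val_inj => /=; rewrite -E1 -E2; by case: (val w).
Qed.
End PB.

Definition Ext (P : tfam T) X (z : T X) :=
  forall M (o : gmap (Defs.orbit M) X), P M (tR o z).
Definition ExtG (P : tfam T) X (good : pred X) (z : T X) :=
  forall M (o : gmap (Defs.orbit M) X), good (o (obase M)) -> P M (tR o z).

Lemma Ext_R P X X' (q : gmap X' X) (z : T X) : Ext P z -> Ext P (tR q z).
Proof. by move=> hz M o; rewrite -tR_comp. Qed.

Lemma coreTr (P U : tfam T) :
  (forall M, U M 0) -> (forall M a b, U M a -> U M b -> U M (a + b)) ->
  (forall M K (g : gmap (Defs.orbit M) (Defs.orbit K)) a, P M a -> U K (tTr g a)) ->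
  forall W K (f : gmap W (Defs.orbit K)) (z : T W), Ext P z -> U K (tTr f z).
Proof.
move=> U0 UD UTr W K f z; have [n hn] : exists n, (#|W| <= n)%N by exists #|W|.
elim: n W K f z hn => [|n IH] W K f z hn hz;
  (case: (pickP (fun _ : W => true)) => [w0 _|h0];
   [|by rewrite Tr_empty // => w; have := h0 w]).
- have hpos : (0 < #|W|)%N by apply/card_gt0P; exists w0.
  by move: hn; rewrite leqn0 => /eqP E; rewrite E in hpos.
- case: (decomp w0) => S [W' [h [hinj hsurj hcard _]]].
  rewrite (Tr_iso hinj hsurj) Tr_sum; apply: UD.
    rewrite -tR_comp; apply: UTr; exact: hz.
  apply: IH; last by do 2 apply: Ext_R.
  by rewrite -ltnS (leq_trans hcard hn).
Qed.

Lemma coreNG (P V : tfam T) :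
  (forall M c v, V M v -> V M (c * v)) ->
  (forall M K (g : gmap (Defs.orbit M) (Defs.orbit K)) a, P M a -> V K (tN g a)) ->
  forall W (good : pred W), (forall w g, good (gsact w g) = good w) ->
  forall w0, good w0 -> forall K (f : gmap W (Defs.orbit K)) (z : T W),
  ExtG P good z -> V K (tN f z).
Proof.
move=> Vm VN W good gi w0 gw0 K f z hz.
case: (decomp w0) => S [W' [h [hinj hsurj _ hl]]].
rewrite (N_iso hinj hsurj) N_sum mulrC; apply: Vm.
rewrite -tR_comp; apply: VN; apply: hz.
by case: (hl (obase S)) => x /= ->; rewrite gi.
Qed.

Lemma coreN2 (P1 P2 V1 V2 V : tfam T) :
  (forall M c v, V2 M v -> V2 M (c * v)) ->
  (forall M a b, V1 M a -> V2 M b -> V M (a * b)) ->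
  (forall M K (g : gmap (Defs.orbit M) (Defs.orbit K)) a, P1 M a -> V1 K (tN g a)) ->
  (forall M K (g : gmap (Defs.orbit M) (Defs.orbit K)) a, P2 M a -> V2 K (tN g a)) ->
  forall W (good1 good2 : pred W), (forall w g, good1 (gsact w g) = good1 w) ->
  (forall w g, good2 (gsact w g) = good2 w) ->
  (forall w, good1 w -> ~~ good2 w) ->
  forall w1 w2, good1 w1 -> good2 w2 ->
  forall K (f : gmap W (Defs.orbit K)) (z : T W),
  ExtG P1 good1 z -> ExtG P2 good2 z -> V K (tN f z).
Proof.
move=> V2m VM VN1 VN2 W good1 good2 gi1 gi2 gdis w1 w2 g1 g2 K f z hz1 hz2.
case: (decomp w1) => S [W' [h [hinj hsurj _ hl]]].
rewrite (N_iso hinj hsurj) N_sum; apply: VM.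
  rewrite -tR_comp; apply: VN1; apply: hz1.
  by case: (hl (obase S)) => x /= ->; rewrite gi1.
case: (hsurj w2) => [[C|w2']] E.
  case: (hl C) => x Ex; move: g2; rewrite -E Ex gi2 => g2.
  by move: (gdis _ g1); rewrite g2.
apply: (@coreNG P2 V2 V2m VN2 _ (fun w => good2 (h (inr w))) _ w2').
- move=> w g /=; have := gfunE h (inr w) g; rewrite /= => ->; by rewrite gi2.
- by rewrite /= E.
- move=> M o /= hg; rewrite -!tR_comp; exact: hz2.
Qed.

Section Exp.
Variables (A X Y : gset gT) (p : gmap A X) (f : gmap X Y).
Lemma exp_fiber (w : gpi p f) x : f x = (val w).1 ->
  exists a, p a = x /\ (val w).2 x = Some a.
Proof.
move=> E; have := forallP (valP w) x; rewrite /= E eqxx.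
by case: ((val w).2 x) => [a /eqP pa|//]; exists a.
Qed.
Lemma exp_e_fiber (w : gpi p f) x : f x = (val w).1 ->
  exists v : gev p f, exp_e p f v = w /\ p (exp_ev p f v) = x.
Proof.
case/exp_fiber => a [pa sa].
have ok : ev_ok (a, w) by rewrite /ev_ok /= pa sa.
by exists (exist _ (a, w) ok : ev_car p f); split.
Qed.
End Exp.


Lemma pb_point (M : {group gT}) A X (p : gmap A X) (f : gmap X (Defs.orbit M))
   (good : pred A) M' (o : gmap (Defs.orbit M') (gpi p f)) x :
  f x = (val (o (obase M'))).1 -> (forall w, p w = x -> good w) ->
  exists q : gpb o (exp_e p f), good (exp_ev p f (psnd o (exp_e p f) q)).
Proof.
move=> fx hx; case: (exp_e_fiber fx) => v [ev pv].
have hq : pb_pred o (exp_e p f) (obase M', v) by apply/eqP; exact: (esym ev).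
exists (exist _ (obase M', v) hq : sub_car (pb_pred o (exp_e p f))); exact: hx.
Qed.

Lemma ntlG (Af V U : tfam T) :
  (forall M c v, V M v -> V M (c * v)) ->
  (forall M K (g : gmap (Defs.orbit M) (Defs.orbit K)) a, Af M a -> V K (tN g a)) ->
  (forall M, U M 0) -> (forall M a b, U M a -> U M b -> U M (a + b)) ->
  (forall M K (g : gmap (Defs.orbit M) (Defs.orbit K)) a, V M a -> U K (tTr g a)) ->
  forall W X K (p : gmap W X) (f : gmap X (Defs.orbit K)) (good : pred W),
  (forall w g, good (gsact w g) = good w) ->
  (forall y, exists x, f x = y /\ forall w, p w = x -> good w) ->
  forall (w : T W), ExtG Af good w -> U K (tN f (tTr p w)).
Proof.
move=> Vm VN U0 UD UTr W X K p f good gi hf w hw.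
rewrite tdistr; apply: (coreTr U0 UD UTr) => M o.
rewrite (tBC_N (pb_is o (exp_e p f))).
case: (hf (val (o (obase M))).1) => x [fx hx].
case: (pb_point fx hx) => q0 hq0.
apply: (@coreNG Af V Vm VN _ (fun q => good (exp_ev p f (psnd o (exp_e p f) q))) _ q0 hq0).
- by move=> q g; rewrite !gfunE gi.
- move=> M' q hq; rewrite -!tR_comp; exact: hw.
Qed.

Lemma ntl2 (A1 A2 V1 V2 V U : tfam T) :
  (forall M c v, V2 M v -> V2 M (c * v)) ->
  (forall M a b, V1 M a -> V2 M b -> V M (a * b)) ->
  (forall M K (g : gmap (Defs.orbit M) (Defs.orbit K)) a, A1 M a -> V1 K (tN g a)) ->
  (forall M K (g : gmap (Defs.orbit M) (Defs.orbit K)) a, A2 M a -> V2 K (tN g a)) ->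
  (forall M, U M 0) -> (forall M a b, U M a -> U M b -> U M (a + b)) ->
  (forall M K (g : gmap (Defs.orbit M) (Defs.orbit K)) a, V M a -> U K (tTr g a)) ->
  forall W X K (p : gmap W X) (f : gmap X (Defs.orbit K)) (good1 good2 : pred W),
  (forall w g, good1 (gsact w g) = good1 w) ->
  (forall w g, good2 (gsact w g) = good2 w) ->
  (forall w, good1 w -> ~~ good2 w) ->
  (forall y, exists x, f x = y /\ forall w, p w = x -> good1 w) ->
  (forall y, exists x, f x = y /\ forall w, p w = x -> good2 w) ->
  forall (w : T W), ExtG A1 good1 w -> ExtG A2 good2 w -> U K (tN f (tTr p w)).
Proof.
move=> V2m VM VN1 VN2 U0 UD UTr W X K p f good1 good2 gi1 gi2 gdis hf1 hf2 w hw1 hw2.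
rewrite tdistr; apply: (coreTr U0 UD UTr) => M o.
rewrite (tBC_N (pb_is o (exp_e p f))).
case: (hf1 (val (o (obase M))).1) => x1 [fx1 hx1].
case: (hf2 (val (o (obase M))).1) => x2 [fx2 hx2].
case: (pb_point fx1 hx1) => q1 hq1.
case: (pb_point fx2 hx2) => q2 hq2.
apply: (@coreN2 A1 A2 V1 V2 V V2m VM VN1 VN2 _
   (fun q => good1 (exp_ev p f (psnd o (exp_e p f) q)))
   (fun q => good2 (exp_ev p f (psnd o (exp_e p f) q))) _ _ _ q1 q2 hq1 hq2).
- by move=> q g; rewrite !gfunE gi1.
- by move=> q g; rewrite !gfunE gi2.
- by move=> q; apply: gdis.
- move=> M' q hq; rewrite -!tR_comp; exact: hw1.
- move=> M' q hq; rewrite -!tR_comp; exact: hw2.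
Qed.

Section Factor.
Variables (M : {group gT}) (X Y : gset gT) (o : gmap (Defs.orbit M) (gsum X Y)).
Definition fl_fun (x0 : X) (C : Defs.orbit M) : X := if o C is inl x then x else x0.
Definition fr_fun (y0 : Y) (C : Defs.orbit M) : Y := if o C is inr y then y else y0.
Lemma fl_spec x0 : o (obase M) = inl x0 -> forall C, o C = inl (fl_fun x0 C).
Proof. move=> E C; case: (orbit_trans C) => g ->; by rewrite /fl_fun gfunE E. Qed.
Lemma fr_spec y0 : o (obase M) = inr y0 -> forall C, o C = inr (fr_fun y0 C).
Proof. move=> E C; case: (orbit_trans C) => g ->; by rewrite /fr_fun gfunE E. Qed.
Lemma fl_E x0 (E : o (obase M) = inl x0) C g :
  fl_fun x0 (gsact C g) = gsact (fl_fun x0 C) g.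
Proof.
have h1 := fl_spec E (gsact C g); rewrite gfunE (fl_spec E C) /= in h1; by case: h1.
Qed.
Lemma fr_E y0 (E : o (obase M) = inr y0) C g :
  fr_fun y0 (gsact C g) = gsact (fr_fun y0 C) g.
Proof.
have h1 := fr_spec E (gsact C g); rewrite gfunE (fr_spec E C) /= in h1; by case: h1.
Qed.

Lemma sum_factor :
  (exists2 o' : gmap (Defs.orbit M) X, o = gcomp (ginl X Y) o' & o (obase M) = inl (o' (obase M))) \/
  (exists2 o' : gmap (Defs.orbit M) Y, o = gcomp (ginr X Y) o' & o (obase M) = inr (o' (obase M))).
Proof.
case E: (o (obase M)) => [x0|y0].
  left; exists (GMap (fl_E E)); last by rewrite /= /fl_fun E.
  by apply: gmap_ext => C /=; rewrite (fl_spec E).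
right; exists (GMap (fr_E E)); last by rewrite /= /fr_fun E.
by apply: gmap_ext => C /=; rewrite (fr_spec E).
Qed.
End Factor.

Definition nabla_fun X (u : gsum X X) : X := match u with inl x => x | inr x => x end.
Lemma nablaE X u g : @nabla_fun X (gsact u g) = gsact (nabla_fun u) g.
Proof. by case: u. Qed.
Definition nabla X : gmap (gsum X X) X := GMap (@nablaE X).

Lemma Tr_nabla X (c : T (gsum X X)) :
  tTr (nabla X) c = tR (ginl X X) c + tR (ginr X X) c.
Proof.
rewrite Tr_sum; have -> : gcomp (nabla X) (ginl X X) = gid X by apply: gmap_ext.
have -> : gcomp (nabla X) (ginr X X) = gid X by apply: gmap_ext.
by rewrite !tTr_id.
Qed.

Lemma N_nabla X (c : T (gsum X X)) :
  tN (nabla X) c = tR (ginl X X) c * tR (ginr X X) c.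
Proof.
rewrite N_sum; have -> : gcomp (nabla X) (ginl X X) = gid X by apply: gmap_ext.
have -> : gcomp (nabla X) (ginr X X) = gid X by apply: gmap_ext.
by rewrite !tN_id.
Qed.


Lemma tR_sum X Y (f : gmap X Y) n (a : 'I_n -> T Y) :
  tR f (\sum_(i < n) a i) = \sum_(i < n) tR f (a i).
Proof. by apply: big_morph; [exact: tRD | exact: tR0]. Qed.
Lemma tTr_sum X Y (f : gmap X Y) n (a : 'I_n -> T X) :
  tTr f (\sum_(i < n) a i) = \sum_(i < n) tTr f (a i).
Proof. by apply: big_morph; [exact: tTrD | exact: tTr0]. Qed.

Section SumIdeal.
Variables (L : Type) (I : L -> tfam T).
Arguments I : clear implicits.
Hypothesis hI : forall l, is_tideal (I l).

Let S : tfam T := fun K y => @tsumfam _ _ _ I K y.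
Arguments S : clear implicits.

Lemma S0 M : S M 0.
Proof.
have l0 : 'I_0 -> L by case=> m; rewrite ltn0.
by exists 0, l0, (fun _ => 0); split => [[]|]; rewrite ?big_ord0.
Qed.

Lemma S_single l M y : I l M y -> S M y.
Proof. move=> hy; exists 1, (fun _ => l), (fun _ => y); split => //; by rewrite big_ord1. Qed.

Lemma SD M a b : S M a -> S M b -> S M (a + b).
Proof.
case=> n1 [l1 [a1 [h1 ->]]] [n2 [l2 [a2 [h2 ->]]]].
exists (n1 + n2)%N, (fun i => match split i with inl j => l1 j | inr j => l2 j end),
  (fun i => match split i with inl j => a1 j | inr j => a2 j end); split.
  by move=> i; case: (split i).
rewrite big_split_ord /=; congr (_ + _); apply: eq_bigr => i _.
  by rewrite (unsplitK (inl i : 'I_n1 + 'I_n2)).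
by rewrite (unsplitK (inr i : 'I_n1 + 'I_n2)).
Qed.

Lemma Smul M c y : S M y -> S M (c * y).
Proof.
case=> n [l [a [h ->]]]; exists n, l, (fun i => c * a i); split; last by rewrite mulr_sumr.
move=> i; case: (hI (l i)) => _ _ hm _ _; exact: hm.
Qed.

Lemma SR M K (f : gmap (Defs.orbit M) (Defs.orbit K)) y : S K y -> S M (tR f y).
Proof.
case=> n [l [a [h ->]]]; exists n, l, (fun i => tR f (a i)); split; last by rewrite tR_sum.
move=> i; case: (hI (l i)) => _ _ _ hr _; exact: hr.
Qed.

Lemma STr M K (f : gmap (Defs.orbit M) (Defs.orbit K)) y : S M y -> S K (tTr f y).
Proof.
case=> n [l [a [h ->]]]; exists n, l, (fun i => tTr f (a i)); split; last by rewrite tTr_sum.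
move=> i; case: (hI (l i)) => _ _ _ _ ht; exact: (ht _ _ _ _ (h i)).1.
Qed.

Definition Sn n : tfam T := fun K y => exists l a,
  (forall i : 'I_n, I (l i) K (a i)) /\ y = \sum_(i < n) a i.
Arguments Sn : clear implicits.

Lemma SnR n M K (f : gmap (Defs.orbit M) (Defs.orbit K)) y : Sn n K y -> Sn n M (tR f y).
Proof.
case=> [l [a [h ->]]]; exists l, (fun i => tR f (a i)); split; last by rewrite tR_sum.
move=> i; case: (hI (l i)) => _ _ _ hr _; exact: hr.
Qed.

Lemma SN n : forall M K (g : gmap (Defs.orbit M) (Defs.orbit K)) y, Sn n M y -> S K (tN g y).
Proof.
elim: n => [|n IH] M K g y [l [a [h ->]]].
  rewrite big_ord0.
  have -> : (0 : T (Defs.orbit M)) = tTr (gfromempty (Defs.orbit M)) 0 by rewrite tTr0.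
  apply: (@ntlG (fun _ _ => False) S S _ _ S0 SD STr _ _ _ _ _ predT) => //.
  - by move=> *; apply: Smul.
  - by move=> y0; case: (omap_surj g y0) => x hx; exists x.
  - by move=> ? o; case: (o (obase _)).
rewrite big_ord_recl.
set b := \sum_(i < n) _.
have hb : Sn n M b by exists (fun i => l (lift ord0 i)), (fun i => a (lift ord0 i)).
case: (coprod_ex (a ord0) b) => c [c1 c2].
rewrite -c1 -c2 -Tr_nabla.
apply: (@ntlG (fun M z => I (l ord0) M z \/ Sn n M z) S S _ _ S0 SD STr _ _ _ _ _ predT) => //.
- by move=> *; apply: Smul.
- move=> M' K' g' z [hz|hz]; last exact: IH hz.
  apply: (S_single (l:=l ord0)); case: (hI (l ord0)) => _ _ _ _ ht; exact: (ht _ _ _ _ hz).2.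
- by move=> y'; case: (omap_surj g y') => x hx; exists x.
- move=> M' o _; case: (sum_factor o) => [[o' -> _]|[o' -> _]]; rewrite tR_comp.
    left; rewrite c1; case: (hI (l ord0)) => _ _ _ hr _; exact: hr.
  by right; rewrite c2; apply: SnR.
Qed.

Lemma sum_tideal : is_tideal (tsumfam I).
Proof.
split.
- exact: S0.
- exact: SD.
- by move=> *; apply: Smul.
- by move=> *; apply: SR.
- move=> M K f y hy; split; first exact: STr.
  by case: hy => n [l [a [h E]]]; apply: (SN (n := n)); exists l, a.
Qed.
End SumIdeal.

End Tamb.


Local Close Scope group_scope.
Local Open Scope ring_scope.


Arguments tR0 {gT T X Y} f.
Arguments tR1 {gT T X Y} f.
Arguments tTr0 {gT T X Y} f.
Arguments tN1 {gT T X Y} f.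

Section Tamb2.
Variables (gT : finGroupType) (T : tambara gT).
Implicit Types X Y Z W : gset gT.

Section SMap.
Variables (X1 X2 Y1 Y2 : gset gT) (f1 : gmap X1 Y1) (f2 : gmap X2 Y2).
Definition smap_fun (u : gsum X1 X2) : gsum Y1 Y2 :=
  match u with inl a => inl (f1 a) | inr b => inr (f2 b) end.
Lemma smapE u g : smap_fun (gsact u g) = gsact (smap_fun u) g.
Proof. by case: u => [a|b] /=; rewrite gfunE. Qed.
Definition gsmap : gmap (gsum X1 X2) (gsum Y1 Y2) := GMap smapE.
Lemma pb_smap_l : is_pullback gsmap (ginl Y1 Y2) (ginl X1 X2) f1.
Proof.
split=> // [[a|b] y] //= [E]; exists a; split; first by split.
by move=> w [[->]].
Qed.
Lemma pb_smap_r : is_pullback gsmap (ginr Y1 Y2) (ginr X1 X2) f2.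
Proof.
split=> // [[a|b] y] //= [E]; exists b; split; first by split.
by move=> w [[->]].
Qed.
End SMap.

Lemma NTr_smap X1 X2 Y (f1 : gmap X1 Y) (f2 : gmap X2 Y) (c : T (gsum X1 X2)) :
  tN (nabla Y) (tTr (gsmap f1 f2) c) = tTr f1 (tR (ginl X1 X2) c) * tTr f2 (tR (ginr X1 X2) c).
Proof. by rewrite N_nabla (tBC_Tr (pb_smap_l f1 f2)) (tBC_Tr (pb_smap_r f1 f2)). Qed.

Definition is_inl X Y (u : gsum X Y) := if u is inl _ then true else false.
Definition is_inr X Y (u : gsum X Y) := if u is inr _ then true else false.


(* ---------- nilpotence bound ---------- *)
Section EL.
Variables (H0 : {group gT}) (x : T (Defs.orbit H0)).

Definition md (M : {group gT}) :=
  {M' : {group gT} & (gmap (Defs.orbit M') (Defs.orbit M) * gmap (Defs.orbit M') (Defs.orbit H0))%type}.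
Definition mono M (d : md M) : T (Defs.orbit M) := tN (projT2 d).1 (tR (projT2 d).2 x).

Definition Pj (j : nat) : tfam T := fun M z => exists (c : T (Defs.orbit M)) (s : seq (md M)),
  (j <= size s)%N /\ z = c * \prod_(d <- s) mono d.
Arguments Pj : clear implicits.

Definition Qj (j : nat) : tfam T := fun M z => forall F : tfam T,
  (forall M, F M 0) -> (forall M a b, F M a -> F M b -> F M (a + b)) ->
  (forall M K (g : gmap (Defs.orbit M) (Defs.orbit K)) a, F M a -> F K (tTr g a)) ->
  (forall M a, Pj j M a -> F M a) -> F M z.
Arguments Qj : clear implicits.

Lemma P_mul j M c z : Pj j M z -> Pj j M (c * z).
Proof. by case=> c' [s [hs ->]]; exists (c * c'), s; rewrite mulrA. Qed.

Lemma P_prod a b M z1 z2 : Pj a M z1 -> Pj b M z2 -> Pj (a + b) M (z1 * z2).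
Proof.
case=> c1 [s1 [h1 ->]] [c2 [s2 [h2 ->]]]; exists (c1 * c2), (s1 ++ s2); split.
  by rewrite size_cat leq_add.
by rewrite big_cat /= mulrACA.
Qed.

Lemma P_mono M (d : md M) : Pj 1 M (mono d).
Proof. by exists 1, [:: d]; rewrite big_seq1 mul1r. Qed.

Lemma P_N j M K (g : gmap (Defs.orbit M) (Defs.orbit K)) z : Pj j M z -> Pj j K (tN g z).
Proof.
case=> c [s [hs ->]].
exists (tN g c), [seq existT _ (projT1 d) (gcomp g (projT2 d).1, (projT2 d).2) | d <- s].
split; first by rewrite size_map.
rewrite tNM big_map; congr (_ * _).
rewrite (big_morph (tN g) (tNM g) (tN1 g)); apply: eq_bigr => d _.
by rewrite /mono /= tN_comp.
Qed.

Lemma P_R1 M K (o : gmap (Defs.orbit M) (Defs.orbit K)) (d : md K) : Pj 1 M (tR o (mono d)).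
Proof.
case: d => M' [b c]; rewrite /mono /= (tBC_N (pb_is o b)).
case: (omap_surj b (o (obase M))) => x0 hx0.
have hq : pb_pred o b (obase M, x0) by rewrite /pb_pred /= hx0.
apply: (@coreNG gT T (fun M'' z => exists g : gmap (Defs.orbit M'') (Defs.orbit H0), z = tR g x)
   (Pj 1) _ _ (gpb o b) predT _ (exist _ (obase M, x0) hq : sub_car (pb_pred o b))) => //.
- by move=> *; apply: P_mul.
- move=> M1 K1 g1 a [g2 ->].
  exact: (P_mono (existT _ M1 (g1, g2) : md K1)).
- move=> M1 q _; exists (gcomp c (gcomp (psnd o b) q)); by rewrite !tR_comp.
Qed.

Lemma P_R j M K (o : gmap (Defs.orbit M) (Defs.orbit K)) z : Pj j K z -> Pj j M (tR o z).
Proof.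
case=> c [s [hs ->]]; rewrite tRM (big_morph (tR o) (tRM o) (tR1 o)).
apply: P_mul; elim: s j hs => [|d s IH] j hs.
  by rewrite big_nil; exists 1, [::]; rewrite big_nil mulr1.
rewrite big_cons; case: j hs => [|j] hs.
  by exists (\prod_(d0 <- d :: s) tR o (mono d0)), [::]; rewrite big_nil mulr1 big_cons.
by have := P_prod (P_R1 o d) (IH j hs); rewrite add1n.
Qed.

Lemma Q_P j M z : Pj j M z -> Qj j M z.
Proof. by move=> hz F _ _ _ hP; exact: hP. Qed.
Lemma Q0 j M : Qj j M 0.
Proof. by move=> F h0. Qed.
Lemma QD j M a b : Qj j M a -> Qj j M b -> Qj j M (a + b).
Proof. by move=> ha hb F h0 hD hT hP; apply: (hD); [exact: (ha F h0 hD hT hP) | exact: (hb F h0 hD hT hP)]. Qed.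
Lemma QTr j M K (g : gmap (Defs.orbit M) (Defs.orbit K)) a : Qj j M a -> Qj j K (tTr g a).
Proof. by move=> ha F h0 hD hT hP; apply: (hT); exact: (ha F h0 hD hT hP). Qed.
Lemma QTrP j M K (g : gmap (Defs.orbit M) (Defs.orbit K)) a : Pj j M a -> Qj j K (tTr g a).
Proof. by move=> ha; apply: QTr; apply: Q_P. Qed.

Lemma inl_fiber X Y Z (f : gmap X Z) (g : gmap Y Z) y :
  exists u, nabla Z u = y /\ forall w, gsmap f g w = u -> is_inl w.
Proof. by exists (inl y); split => // [[]]. Qed.
Lemma inr_fiber X Y Z (f : gmap X Z) (g : gmap Y Z) y :
  exists u, nabla Z u = y /\ forall w, gsmap f g w = u -> is_inr w.
Proof. by exists (inr y); split => // [[]]. Qed.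

Lemma Frob j M K (g : gmap (Defs.orbit M) (Defs.orbit K)) p c :
  Pj j M p -> Qj j K (c * tTr g p).
Proof.
move=> hp; case: (coprod_ex p c) => c0 [c1 c2].
have -> : c * tTr g p = tN (nabla (Defs.orbit K)) (tTr (gsmap g (gid (Defs.orbit K))) c0).
  by rewrite NTr_smap tTr_id c1 c2 mulrC.
apply: (@ntlG gT T (Pj j) (Pj j) (Qj j) _ _ (@Q0 j) (@QD j) (@QTrP j) _ _ _ _ _ (@is_inl _ _)).
- by move=> *; apply: P_mul.
- by move=> *; apply: P_N.
- by move=> [] ? ?.
- by move=> y; apply: inl_fiber.
- move=> M' o; case: (sum_factor o) => [[o' -> _]|[o' _ ->]] //= _.
  by rewrite tR_comp c1; apply: P_R.
Qed.

Lemma Q_mul j M c z : Qj j M z -> Qj j M (c * z).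
Proof.
move=> hz.
suff : forall K (g : gmap (Defs.orbit M) (Defs.orbit K)) c, Qj j K (c * tTr g z).
  by move/(_ M (gid _) c); rewrite tTr_id.
apply: (hz (fun M z => forall K (g : gmap (Defs.orbit M) (Defs.orbit K)) c, Qj j K (c * tTr g z))).
- by move=> M' K g c'; rewrite tTr0 mulr0; apply: Q0.
- by move=> M' a b ha hb K g c'; rewrite tTrD mulrDr; apply: QD.
- by move=> M1 K1 g1 a ha K g c'; rewrite -tTr_comp.
- by move=> M1 a ha K g c'; apply: Frob.
Qed.

Lemma Q_R j M K (o : gmap (Defs.orbit M) (Defs.orbit K)) z : Qj j K z -> Qj j M (tR o z).
Proof.
move=> hz; move: M o.
apply: (hz (fun K z => forall M (o : gmap (Defs.orbit M) (Defs.orbit K)), Qj j M (tR o z))).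
- by move=> K' M o; rewrite tR0; apply: Q0.
- by move=> K' a b ha hb M o; rewrite tRD; apply: QD.
- move=> M1 K1 g1 a ha M o; rewrite (tBC_Tr (pb_is o g1)).
  apply: (coreTr (P := Qj j) (@Q0 j) (@QD j) (@QTr j)).
  by move=> M2 q; rewrite -tR_comp; apply: ha.
- by move=> K' a ha M o; apply: Q_P; apply: P_R.
Qed.

Definition FN j : tfam T := fun M z => forall M' (o : gmap (Defs.orbit M') (Defs.orbit M)),
  Qj j M' (tR o z) /\ forall K (g : gmap (Defs.orbit M') (Defs.orbit K)), Qj j K (tN g (tR o z)).
Arguments FN : clear implicits.

Lemma FN_R j M K (o : gmap (Defs.orbit M) (Defs.orbit K)) z : FN j K z -> FN j M (tR o z).
Proof. by move=> hz M' o'; rewrite -tR_comp; apply: hz. Qed.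

Lemma FN_N j M K (g : gmap (Defs.orbit M) (Defs.orbit K)) z : FN j M z -> Qj j K (tN g z).
Proof. by move=> hz; have := (hz M (gid _)).2 K g; rewrite tR_id. Qed.

Lemma Q_N j M K (g : gmap (Defs.orbit M) (Defs.orbit K)) z : Qj j M z -> Qj j K (tN g z).
Proof.
move=> hz; apply: FN_N; move: M z hz g => M z hz _.
apply: (hz (FN j)).
- move=> M1 M' o; rewrite tR0; split; first exact: Q0.
  move=> K1 g1.
  have -> : (0 : T (Defs.orbit M')) = tTr (gfromempty (Defs.orbit M')) 0 by rewrite tTr0.
  apply: (@ntlG gT T (fun _ _ => False) (Qj j) (Qj j) _ _ (@Q0 j) (@QD j) (@QTr j) _ _ _ _ _ predT) => //.
  + by move=> *; apply: Q_mul.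
  + by move=> y; case: (omap_surj g1 y) => x1 hx1; exists x1.
  + by move=> ? o1; case: (o1 (obase _)).
- move=> M1 a b ha hb M' o; rewrite tRD; split; first by apply: QD; [apply: (ha _ o).1 | apply: (hb _ o).1].
  move=> K1 g1; case: (coprod_ex (tR o a) (tR o b)) => c [c1 c2].
  rewrite -c1 -c2 -Tr_nabla.
  apply: (@ntlG gT T (FN j) (Qj j) (Qj j) _ _ (@Q0 j) (@QD j) (@QTr j) _ _ _ _ _ predT) => //.
  + by move=> *; apply: Q_mul.
  + by move=> *; apply: FN_N.
  + by move=> y; case: (omap_surj g1 y) => x1 hx1; exists x1.
  + move=> M2 o2 _; case: (sum_factor o2) => [[o' -> _]|[o' -> _]]; rewrite tR_comp.
      by rewrite c1; apply: FN_R; apply: FN_R.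
    by rewrite c2; apply: FN_R; apply: FN_R.
- move=> M1 K1 h1 a ha M' o; split.
    apply: Q_R; apply: QTr; by have := (ha M1 (gid _)).1; rewrite tR_id.
  move=> K2 g2; rewrite (tBC_Tr (pb_is o h1)).
  apply: (@ntlG gT T (FN j) (Qj j) (Qj j) _ _ (@Q0 j) (@QD j) (@QTr j) _ _ _ _ _ predT) => //.
  + by move=> *; apply: Q_mul.
  + by move=> *; apply: FN_N.
  + by move=> y; case: (omap_surj g2 y) => x1 hx1; exists x1.
  + move=> M2 o2 _; rewrite -tR_comp; exact: FN_R.
- move=> M1 a ha M' o; split; first by apply: Q_P; apply: P_R.
  by move=> K1 g1; apply: Q_P; apply: P_N; apply: P_R.
Qed.

Lemma Q_tideal j : is_tideal (Qj j).
Proof.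
split.
- exact: Q0.
- exact: QD.
- by move=> *; apply: Q_mul.
- by move=> *; apply: Q_R.
- by move=> *; split; [apply: QTr | apply: Q_N].
Qed.

End EL.

End Tamb2.


Local Close Scope group_scope.
Local Open Scope ring_scope.


Arguments tR0 {gT T X Y} f.
Arguments tR1 {gT T X Y} f.
Arguments tTr0 {gT T X Y} f.
Arguments tN1 {gT T X Y} f.
Arguments Qj [gT T H0] x j _ _.
Arguments Pj [gT T H0] x j _ _.

Section Tamb3.
Variables (gT : finGroupType) (T : tambara gT).
Implicit Types X Y Z W : gset gT.

Section EL2.
Variables (H0 : {group gT}) (x : T (Defs.orbit H0)).

Lemma TT j M M1 K (g : gmap (Defs.orbit M) (Defs.orbit K)) (g' : gmap (Defs.orbit M1) (Defs.orbit K)) p q :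
  Pj x j M p -> Pj x 1 M1 q -> Qj x j.+1 K (tTr g p * tTr g' q).
Proof.
move=> hp hq; case: (coprod_ex p q) => c0 [c1 c2].
rewrite -{1}c1 -{1}c2 -NTr_smap.
refine (@ntl2 gT T (Pj x j) (Pj x 1) (Pj x j) (Pj x 1) (Pj x j.+1) (Qj x j.+1) _ _ _ _
   (@Q0 _ _ _ x _) (@QD _ _ _ x _) (@QTrP _ _ _ x _) (gsum (Defs.orbit M) (Defs.orbit M1)) _ _ (gsmap g g') (nabla _) (fun u => is_inl u) (fun u => is_inr u) _ _ _ _ _ _ _ _).
- by move=> *; apply: P_mul.
- by move=> M' a b ha hb; rewrite -addn1; apply: P_prod.
- by move=> *; apply: P_N.
- by move=> *; apply: P_N.
- by move=> [] ? ?.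
- by move=> [] ? ?.
- by move=> [].
- by move=> y; apply: inl_fiber.
- by move=> y; apply: inr_fiber.
- move=> M' o; case: (sum_factor o) => [[o' -> _]|[o' _ ->]] //= _.
  by rewrite tR_comp c1; apply: P_R.
- move=> M' o; case: (sum_factor o) => [[o' _ ->]|[o' -> _]] //= _.
  by rewrite tR_comp c2; apply: P_R.
Qed.


Lemma Q_prod j M z y : Qj x j M z -> Qj x 1 M y -> Qj x j.+1 M (z * y).
Proof.
move=> hz hy.
suff : forall K (g : gmap (Defs.orbit M) (Defs.orbit K)) y, Qj x 1 K y -> Qj x j.+1 K (tTr g z * y).
  by move/(_ M (gid _) y hy); rewrite tTr_id.
apply: (hz (fun M z => forall K (g : gmap (Defs.orbit M) (Defs.orbit K)) y,
   Qj x 1 K y -> Qj x j.+1 K (tTr g z * y))).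
- by move=> M' K g y' _; rewrite tTr0 mul0r; apply: Q0.
- by move=> M' a b ha hb K g y' hy'; rewrite tTrD mulrDl; apply: QD; [apply: ha | apply: hb].
- by move=> M1 K1 g1 a ha K g y' hy'; rewrite -tTr_comp; apply: ha.
move=> M1 p hp K g y' hy'.
suff : forall K1 (g' : gmap (Defs.orbit K) (Defs.orbit K1)) (g1 : gmap (Defs.orbit M1) (Defs.orbit K1)),
   Qj x j.+1 K1 (tTr g1 p * tTr g' y').
  by move/(_ K (gid _) g); rewrite tTr_id.
apply: (hy' (fun K y => forall K1 (g' : gmap (Defs.orbit K) (Defs.orbit K1))
   (g1 : gmap (Defs.orbit M1) (Defs.orbit K1)), Qj x j.+1 K1 (tTr g1 p * tTr g' y))).
- by move=> K' K1 g' g1; rewrite tTr0 mulr0; apply: Q0.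
- by move=> K' a b ha hb K1 g' g1; rewrite tTrD mulrDr; apply: QD; [apply: ha | apply: hb].
- by move=> K2 K3 g3 a ha K1 g' g1; rewrite -tTr_comp; apply: ha.
- by move=> K' q hq K1 g' g1; apply: TT.
Qed.

Lemma x_Q1 : Qj x 1 H0 x.
Proof.
apply: Q_P; exists 1, [:: existT _ H0 (gid _, gid _) : md H0 H0].
by rewrite big_seq1 mul1r /mono /= tR_id tN_id.
Qed.

Lemma gen1_Q1 K y : @tgen1 _ _ H0 x K y -> Qj x 1 K y.
Proof. by move=> hy; apply: hy; [apply: Q_tideal | apply: x_Q1]. Qed.

Lemma tpow_Q j K y : @tpow _ _ (@tgen1 _ _ H0 x) j.+1 K y -> Qj x j.+1 K y.
Proof.
elim: j K y => [|j IH] K y; first exact: gen1_Q1.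
move=> hy; apply: hy; first exact: Q_tideal.
move=> M z [a [b [ha hb ->]]]; apply: Q_prod; [exact: IH | exact: gen1_Q1].
Qed.

Definition KT := ({group gT} * {set gT} * {set gT})%type.
Definition key M (d : md H0 M) : KT :=
  (projT1 d, val ((projT2 d).1 (obase _)), val ((projT2 d).2 (obase _))).

Lemma key_mono M (d1 d2 : md H0 M) : key d1 = key d2 -> mono x d1 = mono x d2.
Proof.
case: d1 => M1 [b1 c1]; case: d2 => M2 [b2 c2]; rewrite /key /= => -[E1].
subst M2 => Eb Ec; rewrite /mono /=.
have -> : b1 = b2 by apply: omap_ext; apply: val_inj.
by have -> : c1 = c2 by apply: omap_ext; apply: val_inj.
Qed.

Lemma size_count (u : seq KT) : size u = (\sum_(k : KT) count_mem k u)%N.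
Proof.
elim: u => [|a u IH]; first by rewrite big1.
rewrite /= big_split /= -IH (bigD1 a) //= eqxx big1 // => k hk.
by rewrite eq_sym (negbTE hk).
Qed.

Lemma pigeon (u : seq KT) m : (#|{: KT}| * m < size u)%N -> exists k, (m < count_mem k u)%N.
Proof.
move=> hs; case: (pickP (fun k : KT => (m < count_mem k u)%N)) => [k hk|hn]; first by exists k.
have E : (#|{: KT}| * m = \sum_(k : KT) m)%N by rewrite sum_nat_const.
move: hs; rewrite E ltnNge size_count; case/negP.
by apply: leq_sum => k _; rewrite leqNgt hn.
Qed.


Section Big.
Variable I : tfam T.
Arguments I : clear implicits.
Variables (hI : is_tideal I) (n : nat) (hxn : I H0 (x ^+ n)).

Lemma P_big M z : Pj x (#|{: KT}| * n).+1 M z -> I M z.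
Proof.
case: hI => _ _ hmul hR hTN.
case=> c [s [hs ->]].
have hs' : (#|{: KT}| * n < size (map (@key M) s))%N by rewrite size_map.
case: (pigeon hs') => k hk; rewrite count_map in hk.
have : has (fun d => key d == k) s.
  by rewrite has_count; exact: (leq_ltn_trans (leq0n n) hk).
have has_ex (A : Type) (a : pred A) (l : seq A) : has a l -> exists d, a d.
  by elim: l => //= d l IH; case/orP => [h|/IH //]; exists d.
case/has_ex => d0 /eqP hd0.
rewrite (bigID (fun d => key d == k)) /=.
rewrite (eq_bigr (fun _ => mono x d0)) => [|d /eqP hd]; last by apply: key_mono; rewrite hd hd0.
rewrite big_const_seq iter_mulr_1.
set cnt := count _ s.
have hcnt : (n <= cnt)%N by apply: ltnW; exact: hk.
rewrite -(subnK hcnt) exprD.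
have hI1 : I M (mono x d0 ^+ n).
  rewrite /mono -tNX -tRX; apply: (hTN _ _ _ _ _).2; exact: hR.
have -> : forall a b e f : T (Defs.orbit M), a * (b * e * f) = (a * b * f) * e.
  by move=> a b e f; rewrite mulrAC !mulrA.
by apply: hmul.
Qed.

Lemma Q_big M z : Qj x (#|{: KT}| * n).+1 M z -> I M z.
Proof.
case: hI => h0 hD _ _ hTN => hz.
apply: (hz I) => //.
- by move=> M' K g a ha; exact: (hTN _ _ _ _ ha).1.
- by move=> M' a ha; apply: P_big.
Qed.

Lemma EL_sec : exists N, (1 <= N)%N /\ tsub (tpow (tgen1 x) N) I.
Proof.
exists (#|{: KT}| * n).+1; split => //.
move=> K y hy; apply: Q_big; exact: tpow_Q.
Qed.
End Big.

End EL2.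

Lemma EL (I : tfam T) : is_tideal I -> forall H0 (x : T (Defs.orbit H0)) n,
  I H0 (x ^+ n) -> exists N, (1 <= N)%N /\ tsub (tpow (tgen1 x) N) I.
Proof. move=> hI H0 x n hx; exact: (@EL_sec H0 x I hI n hx). Qed.

End Tamb3.


Local Close Scope group_scope.
Local Open Scope ring_scope.


Section Rad.
Variables (gT : finGroupType) (T : tambara gT).

Lemma tgen_tideal (S : tfam T) : is_tideal (tgen S).
Proof.
split.
- by move=> H J [h0 _ _ _ _] _; exact: h0.
- by move=> H a b ha hb J hJ hS; case: (hJ) => _ hD _ _ _; apply: hD; [exact: ha | exact: hb].
- by move=> H a b hb J hJ hS; case: (hJ) => _ _ hm _ _; apply: (hm); exact: hb.
- by move=> H K f a ha J hJ hS; case: (hJ) => _ _ _ hR _; apply: hR; exact: ha.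
- move=> H K f a ha; split=> J hJ hS; case: (hJ) => _ _ _ _ hT.
    by apply: (hT _ _ _ _ _).1; exact: ha.
  by apply: (hT _ _ _ _ _).2; exact: ha.
Qed.

Lemma tgen1_tideal H0 (x : T (Defs.orbit H0)) : is_tideal (tgen1 x).
Proof.
split.
- by move=> H J [h0 _ _ _ _] _; exact: h0.
- by move=> H a b ha hb J hJ hS; case: (hJ) => _ hD _ _ _; apply: hD; [exact: ha | exact: hb].
- by move=> H a b hb J hJ hS; case: (hJ) => _ _ hm _ _; apply: (hm); exact: hb.
- by move=> H K f a ha J hJ hS; case: (hJ) => _ _ _ hR _; apply: hR; exact: ha.
- move=> H K f a ha; split=> J hJ hS; case: (hJ) => _ _ _ _ hT.
    by apply: (hT _ _ _ _ _).1; exact: ha.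
  by apply: (hT _ _ _ _ _).2; exact: ha.
Qed.

Lemma tgen_sub (S : tfam T) : tsub S (tgen S).
Proof. by move=> H y hy J _ hS; exact: hS. Qed.
Lemma tgen1_self H0 (x : T (Defs.orbit H0)) : tgen1 x x.
Proof. by move=> J _ h. Qed.
Lemma tgen_min (S J : tfam T) : is_tideal J -> tsub S J -> tsub (tgen S) J.
Proof. by move=> hJ hS H y hy; exact: hy. Qed.
Lemma tgen1_min H0 (x : T (Defs.orbit H0)) (J : tfam T) : is_tideal J -> J H0 x -> tsub (tgen1 x) J.
Proof. by move=> hJ hx H y hy; exact: hy. Qed.

Lemma tpow_tideal (P : tfam T) n : is_tideal P -> is_tideal (tpow P n.+1).
Proof. by case: n => [//|n] _; exact: tgen_tideal. Qed.

Lemma tpow_sub (P : tfam T) n : is_tideal P -> tsub (tpow P n.+1) P.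
Proof.
case: n => [//|n] hP H y hy; apply: hy => // K z [a [b [ha hb ->]]].
case: hP => _ _ hm _ _; exact: hm.
Qed.

Lemma tpow_mono (P P' : tfam T) n : tsub P P' -> tsub (tpow P n.+1) (tpow P' n.+1).
Proof.
move=> hP; elim: n => [//|n IH] H y hy J hJ hS; apply: hy => // K z [a [b [ha hb ->]]].
apply: hS; exists a, b; split => //; [exact: IH | exact: hP].
Qed.

Lemma pow_in_tpow H0 (x : T (Defs.orbit H0)) n : tpow (tgen1 x) n.+1 (x ^+ n.+1).
Proof.
elim: n => [|n IH]; first by rewrite expr1; exact: tgen1_self.
move=> J hJ hS; apply: (hS H0 (x ^+ n.+2)); exists (x ^+ n.+1), x.
by split; [exact: IH | exact: tgen1_self | rewrite exprSr].
Qed.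

Lemma gen1_sub H0 (x : T (Defs.orbit H0)) K (y : T (Defs.orbit K)) :
  tgen1 x y -> tsub (tgen1 y) (tgen1 x).
Proof. move=> hy; apply: tgen1_min => //; exact: tgen1_tideal. Qed.

Lemma rad_gen (I : tfam T) H0 (x : T (Defs.orbit H0)) K (y : T (Defs.orbit K)) :
  tradical I x -> tgen1 x y -> tradical I y.
Proof.
case=> [[|n] [hn hs]] // hy; exists n.+1; split => //.
move=> H z hz; apply: hs; apply: (tpow_mono _ hz); exact: gen1_sub.
Qed.

Section WithI.
Variable I : tfam T.
Arguments I : clear implicits.
Hypothesis hI : is_tideal I.

Lemma rad_char H0 (x : T (Defs.orbit H0)) : tradical I x <-> exists n, I H0 (x ^+ n).
Proof.
split.
  case=> [[|n] [hn hs]] //; exists n.+1; apply: hs; exact: pow_in_tpow.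
by case=> n hx; exact: EL hI _ _ _ hx.
Qed.

Lemma rad_tideal : is_tideal (tradical I).
Proof.
have [h0 hD hm hR hTN] := hI.
split.
- move=> H; exists 1%N; split => //; apply: tgen1_min => //; exact: h0.
- move=> H a b /rad_char [n ha] /rad_char [m hb]; apply/rad_char; exists (n + m)%N.
  rewrite exprDn; apply: big_ind; [exact: h0 | exact: hD | ].
  move=> [i hi] _ /=; rewrite -mulr_natl; apply: (hm).
  case: (leqP m i) => hmi.
    by rewrite -(subnK hmi) exprD; apply: (hm); apply: (hm).
  have hni : (n <= n + m - i)%N by rewrite -addnBA ?leq_addr // ltnW.
  by rewrite mulrC -(subnK hni) exprD; apply: (hm); apply: (hm).
- move=> H a b hb; apply: (rad_gen hb); case: (tgen1_tideal b) => _ _ hm' _ _.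
  apply: hm'; exact: tgen1_self.
- move=> H K f a ha; apply: (rad_gen ha); case: (tgen1_tideal a) => _ _ _ hR' _.
  apply: hR'; exact: tgen1_self.
- move=> H K f a ha; case: (tgen1_tideal a) => _ _ _ _ hT'.
  split; apply: (rad_gen ha); [apply: (hT' _ _ _ _ _).1 | apply: (hT' _ _ _ _ _).2];
  exact: tgen1_self.
Qed.

Lemma sub_rad : tsub I (tradical I).
Proof. by move=> H y hy; exists 1%N; split => //; apply: tgen1_min. Qed.

Lemma rad_rad : tsub (tradical (tradical I)) (tradical I).
Proof.
move=> H y [[|n] [hn hs]] //.
have := hs _ _ (pow_in_tpow y n); case/rad_char => k hk.
apply/rad_char; exists (n.+1 * k)%N; by rewrite exprM.
Qed.

Lemma rad_radideal : is_radideal (tradical I).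
Proof.
split; first exact: rad_tideal.
move=> H y; split; first by move=> hy; exists 1%N; split => //; apply: tgen1_min => //; exact: rad_tideal.
exact: rad_rad.
Qed.
End WithI.

Lemma sub_rad' (I : tfam T) : is_tideal I -> tsub I (tradical I).
Proof. by move=> hI H y hy; exists 1%N; split => //; apply: tgen1_min. Qed.

Lemma rad_mono (I J : tfam T) : tsub I J -> tsub (tradical I) (tradical J).
Proof. by move=> hIJ H y [n [hn hs]]; exists n; split => // K z /hs; apply: hIJ. Qed.

Lemma radical_sub (J : tfam T) : is_radideal J -> tsub (tradical J) J.
Proof. by case=> _ hr H y hy; apply/(hr H y). Qed.

Lemma sum_sub L (I : L -> tfam T) (J : tfam T) :
  is_tideal J -> (forall l, tsub (I l) J) -> tsub (tsumfam I) J.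
Proof.
move=> [h0 hD _ _ _] hIJ H y [n [l [a [h ->]]]].
apply: big_ind; [exact: h0 | exact: hD | ].
by move=> i _; exact: (hIJ (l i) H (a i) (h i)).
Qed.

End Rad.


Local Close Scope group_scope.
Local Close Scope ring_scope.


Theorem proposition5p2 (gT : finGroupType) (T : tambara gT) :
  (* levelwise sums of Tambara ideals are Tambara ideals *)
  (forall (L : Type) (I : L -> tfam T),
      (forall l, is_tideal (I l)) -> is_tideal (tsumfam I)) /\
  (* meets in RadId_G(T): levelwise intersections *)
  (forall (L : Type) (I : L -> tfam T),
      (forall l, is_radideal (I l)) ->
      [/\ is_radideal (tcap I), (forall l, tsub (tcap I) (I l))
        & (forall J, is_radideal J -> (forall l, tsub J (I l)) -> tsub J (tcap I))]) /\
  (* joins in RadId_G(T): radical of the levelwise sum *)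
  (forall (L : Type) (I : L -> tfam T),
      (forall l, is_radideal (I l)) ->
      [/\ is_radideal (tjoin I), (forall l, tsub (I l) (tjoin I))
        & (forall J, is_radideal J -> (forall l, tsub (I l) J) -> tsub (tjoin I) J)]) /\
  (* frame law: finite meets distribute over arbitrary joins *)
  (forall (L : Type) (J : tfam T) (I : L -> tfam T),
      is_radideal J -> (forall l, is_radideal (I l)) ->
      teq (tmeet J (tjoin I)) (tjoin (fun l => tmeet J (I l)))).
Proof.
split; first by move=> L I hI; exact: sum_tideal.
split.
  move=> L I hI.
  have hId : is_tideal (tcap I).
    split.
    - by move=> H l; case: (hI l) => [[h0 _ _ _ _] _]; exact: h0.
    - by move=> H a b ha hb l; case: (hI l) => [[_ hD _ _ _] _]; apply: hD; [exact: ha | exact: hb].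
    - by move=> H a b hb l; case: (hI l) => [[_ _ hm _ _] _]; apply: hm; exact: hb.
    - by move=> H K f a ha l; case: (hI l) => [[_ _ _ hR _] _]; apply: hR; exact: ha.
    - move=> H K f a ha; split => l; case: (hI l) => [[_ _ _ _ hT] _].
        by apply: (hT _ _ _ _ _).1; exact: ha.
      by apply: (hT _ _ _ _ _).2; exact: ha.
  split.
  - split => // H y; split; first exact: (sub_rad' hId).
    case=> n [hn hs] l; case: (hI l) => _ hr; apply/(hr H y).
    by exists n; split => // K z hz; exact: hs K z hz l.
  - by move=> l H y hy; exact: hy l.
  - by move=> J _ hJ H y hy l; exact: hJ l H y hy.
split.
  move=> L I hI; have hS := sum_tideal (fun l => (hI l).1).
  split.
  - exact: rad_radideal.
  - move=> l H y hy; apply: (sub_rad' hS); exact: S_single hy.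
  - move=> J hJ hIJ H y hy; apply: (radical_sub hJ); apply: (rad_mono _ hy).
    exact: sum_sub hJ.1 hIJ.
move=> L J I hJ hI.
have hS := sum_tideal (fun l => (hI l).1).
have hM : forall l, is_tideal (tmeet J (I l)).
  move=> l; case: (hJ) => [[j0 jD jm jR jT] _]; case: (hI l) => [[i0 iD im iR iT] _].
  split.
  - by move=> H; split; [exact: j0 | exact: i0].
  - by move=> H a b [ha1 ha2] [hb1 hb2]; split; [exact: jD | exact: iD].
  - by move=> H a b [hb1 hb2]; split; [exact: jm | exact: im].
  - by move=> H K f a [ha1 ha2]; split; [exact: jR | exact: iR].
  - move=> H K f a [ha1 ha2]; split; split.
    + exact: (jT _ _ _ _ ha1).1.
    + exact: (iT _ _ _ _ ha2).1.
    + exact: (jT _ _ _ _ ha1).2.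
    + exact: (iT _ _ _ _ ha2).2.
have hS' := sum_tideal hM.
move=> H y; split.
- case=> hy1; case/(rad_char hS) => n [k [l [a [h E]]]].
  apply/(rad_char hS'); exists n.+1, k, l, (fun i => (y * a i)%R); split.
    move=> i; case: (hJ) => [[_ _ jm _ _] _]; case: (hI (l i)) => [[_ _ im _ _] _].
    split; last by apply: im; exact: h i.
    by rewrite GRing.mulrC; apply: jm.
  by rewrite GRing.exprS E GRing.mulr_sumr.
- move=> hy; split.
  + apply: (radical_sub hJ); apply: (rad_mono _ hy); apply: (sum_sub hJ.1) => l K z [hz _]; exact: hz.
  + apply: (rad_mono _ hy) => K z [k [l [a [h ->]]]]; exists k, l, a; split => // i; exact: (h i).2.
Qed.
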